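(* Let $\mathbb F$ be a finite field with $q$ elements and let $A$ be an $m$-dimensional $\mathbb F$-algebra which can be generated by $r\ge1$ elements as an $\mathbb F$-algebra. For $k\ge r$ let $\mathrm{ng}_k$ be the number of $k$-tuples in $A^k$ which do not generate $A$ as an $\mathbb F$-algebra. Then $\mathrm{ng}_k\le m^{2k/r}q^{mk-k/r}$ for every $k>r$.
   Context: Algebras are associative and unital; elements generate $A$ if the non-commutative monomials in them (including $1$) span $A$. *)

(* Defs.v *)
From HB Require Import structures.
From mathcomp Require Import all_boot all_order all_algebra all_fingroup all_field.
From Stdlib Require Import Reals ClassicalEpsilon.
Set Implicit Arguments. Unset Strict Implicit. Unset Printing Implicit Defensive.
Import GRing.Theory.

Local Open Scope ring_scope.

(* Elements X (a finite sequence in A) generate the algebra A if the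
   non-commutative monomials in them (finite products of elements of X,
   the empty product being 1) span A over F. *)
Definition generates (F : fieldType) (A : falgType F) (X : seq A) : Prop :=
  forall v : A, exists ws : seq (seq A),
    all (fun w => all (fun a => a \in X) w) ws /\
    v \in <<[seq \prod_(a <- w) a | w <- ws]>>%VS.

Definition generatesb (F : fieldType) (A : falgType F) (X : seq A) : bool :=
  if excluded_middle_informative (generates X) then true else false.

Definition ng (F : finFieldType) (A : falgType F) (k : nat) : nat :=
  #|[set t : k.-tuple (finvect_type A) | ~~ generatesb (A := A) t]|.

(* Main.v *)
Require Import Defs.
From HB Require Import structures.
From mathcomp Require Import all_boot all_order all_algebra all_fingroup all_field.
From Stdlib Require Import Reals.
From Stdlib Require Import ClassicalEpsilon.
Section PartH.
Set Implicit Arguments. Unset Strict Implicit. Unset Printing Implicit Defensive.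
Import Order.TTheory GRing.Theory Num.Theory.
Local Open Scope ring_scope.

Lemma holder_ord (R : realFieldType) (I : finType) (n : nat)
  (b : 'I_n -> I -> R) (c : I -> R) (K : R) :
  (0 < n)%nat -> 0 <= K -> (forall x, 0 <= c x) -> (forall j x, 0 <= b j x) ->
  (forall x, c x ^+ n <= K * \prod_j b j x) ->
  (\sum_x c x) ^+ n <= K * \prod_j (\sum_x b j x).
Proof.
move=> n0 K0 c0 b0 H.
have Bge0 j : 0 <= \sum_x b j x by apply: sumr_ge0 => x _.
have RHS0 : 0 <= K * \prod_j (\sum_x b j x).
  by apply: mulr_ge0 => //; apply: prodr_ge0 => j _.
have cle0 x : c x ^+ n <= 0 -> c x = 0.
  move=> h; have : c x ^+ n = 0 by apply/eqP; rewrite eq_le h exprn_ge0.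
  by move/eqP; rewrite expf_eq0 => /andP[_ /eqP].
case: (boolP [exists j, \sum_x b j x == 0]).
  case/existsP => j /eqP Bj.
  have bj0 x : b j x = 0 by apply: (psumr_eq0P (fun x _ => b0 j x) Bj).
  have cx0 x : c x = 0.
    apply: cle0; apply: le_trans (H x) _.
    by rewrite (bigD1 j) //= bj0 mul0r mulr0.
  by rewrite big1 ?expr0n ?gtn_eqF.
rewrite negb_exists => /forallP Bn0.
have Bgt0 j : 0 < \sum_x b j x by rewrite lt_def Bn0 Bge0.
set s := \sum_x c x.
set P := K * \prod_j (\sum_x b j x).
rewrite leNgt; apply/negP => Hlt.
have s0 : 0 <= s by apply: sumr_ge0.
set u := fun x => (\sum_j (b j x / \sum_y b j y)) / n%:R.
have u0 x : 0 <= u x.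
  apply: divr_ge0; last by rewrite ler0n.
  by apply: sumr_ge0 => j _; apply: divr_ge0.
have usum : \sum_x u x = 1.
  rewrite /u -mulr_suml exchange_big /=.
  under eq_bigr => j _ do rewrite -mulr_suml divff ?Bn0 //.
  by rewrite sumr_const card_ord divff // pnatr_eq0 -lt0n.
have keyx x : c x ^+ n <= P * u x ^+ n.
  apply: le_trans (H x) _.
  have -> : \prod_j b j x = \prod_j (\sum_y b j y) * \prod_j (b j x / \sum_y b j y).
    rewrite -big_split /=; apply: eq_bigr => j _.
    by rewrite mulrCA divff ?mulr1 ?Bn0.
  rewrite /P -mulrA ler_wpM2l //.
  rewrite ler_wpM2l //; first by apply: prodr_ge0 => j _.
  have := @leif_AGM R 'I_n predT (fun j : 'I_n => b j x / \sum_y b j y) => /=.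
  rewrite cardT size_enum_ord; case; first by move=> j _; apply: divr_ge0.
  by move=> h _; apply: le_trans h _.
have cle x : c x <= s * u x.
  have [ux0|uxp] := eqVneq (u x) 0.
    have -> : c x = 0 by apply: cle0; move: (keyx x); rewrite ux0 expr0n gtn_eqF // mulr0.
    by rewrite ux0 mulr0.
  have : c x ^+ n <= (s * u x) ^+ n.
    apply: le_trans (keyx x) _; rewrite [X in _ <= X]exprMn.
    exact: (ler_wpM2r (exprn_ge0 _ (u0 x)) (ltW Hlt)).
  by rewrite ler_pXn2r // nnegrE ?c0 // mulr_ge0.
have sp : 0 < s.
  rewrite lt_def s0 andbT; apply/eqP => s00.
  by move: Hlt; rewrite s00 expr0n gtn_eqF // ltNge RHS0.
have [x0 cx0] : exists x, 0 < c x.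
  apply/existsP; apply: contraTT sp; rewrite negb_exists => /forallP h.
  rewrite -leNgt /s; apply: sumr_le0 => x _.
  by move: (h x); rewrite -leNgt.
have ux0 : u x0 != 0.
  apply/eqP => ux00; move: (keyx x0); rewrite ux00 expr0n gtn_eqF // mulr0.
  by move/cle0 => cz; move: cx0; rewrite cz ltxx.
have cstrict : c x0 < s * u x0.
  have : c x0 ^+ n < (s * u x0) ^+ n.
    apply: le_lt_trans (keyx x0) _; rewrite [X in _ < X]exprMn.
    rewrite ltr_pM2r //; rewrite lt_def expf_eq0 (negPf ux0) andbF /=.
    exact: exprn_ge0.
  by rewrite ltr_pXn2r // nnegrE ?c0 // mulr_ge0.
have : s < s.
  rewrite -[X in _ < X]mulr1 -usum mulr_sumr.
  rewrite [X in X < _](bigD1 x0) // [X in _ < X](bigD1 x0) //=.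
  apply: ltr_leD => //; apply: ler_sum => x _; exact: cle.
by rewrite ltxx.
Qed.

Lemma holder_seq (R : realFieldType) (I : finType) (J : Type) (l : seq J)
  (a : J -> I -> R) (c : I -> R) (K : R) :
  (0 < size l)%nat -> 0 <= K -> (forall x, 0 <= c x) -> (forall j x, 0 <= a j x) ->
  (forall x, c x ^+ size l <= K * \prod_(j <- l) a j x) ->
  (\sum_x c x) ^+ size l <= K * \prod_(j <- l) (\sum_x a j x).
Proof.
move=> l0 K0 c0 a0 H; rewrite big_tnth.
apply: (holder_ord (b := fun j x => a (tnth (in_tuple l) j) x)) => //.
by move=> x; move: (H x); rewrite big_tnth.
Qed.

Section Shearer.
Variables (T : finType) (k : nat).

Definition restr (W : {set 'I_k}) (s : {ffun 'I_k -> T}) : {ffun 'I_k -> option T} :=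
  [ffun j => if j \in W then Some (s j) else None].

Definition pc (W : {set 'I_k}) (S : {set {ffun 'I_k -> T}}) := #|[set restr W s | s in S]|.

Lemma card_imset_ker (D E E2 : finType) (f : D -> E) (g : D -> E2) (S : {set D}) :
  (forall s s', s \in S -> s' \in S -> g s = g s' -> f s = f s') ->
  (#|f @: S| <= #|g @: S|)%nat.
Proof.
move=> H; have [->|[s0 s0S]] := set_0Vmem S; first by rewrite !imset0 !cards0.
pose h y := f (odflt s0 [pick s in S | g s == y]).
have -> : f @: S = h @: (g @: S).
  apply/setP => y; apply/imsetP/imsetP.
    case=> s sS ->; exists (g s); first by apply: imset_f.
    rewrite /h; case: pickP => [s' /andP[s'S /eqP e]|]; first by apply: H.
    by move/(_ s); rewrite sS eqxx.
  case=> z /imsetP[s sS ->] ->; rewrite /h; case: pickP => [s' /andP[s'S /eqP e]|].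
    by exists s'.
  by move/(_ s); rewrite sS eqxx.
exact: leq_imset_card.
Qed.

Lemma pc_part (W : {set 'I_k}) (S : {set {ffun 'I_k -> T}}) i : i \in W ->
  pc W S = \sum_(x : T) pc W [set s in S | s i == x].
Proof.
move=> iW; have [->|[s0 s0S]] := set_0Vmem S.
  rewrite /pc imset0 cards0 big1 // => x _.
  by rewrite (_ : [set s in set0 | _] = set0) ?imset0 ?cards0 //; apply/setP => s; rewrite !inE.
rewrite /pc -sum1_card (partition_big (fun y : {ffun 'I_k -> option T} => odflt (s0 i) (y i)) predT) //=.
apply: eq_bigr => x _; rewrite -sum1_card; apply: eq_bigl => y.
apply/andP/imsetP.
  case=> /imsetP[s sS ->]; rewrite /restr ffunE iW /= => /eqP e.
  by exists s => //; rewrite inE sS e eqxx.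
case=> s; rewrite inE => /andP[sS /eqP e] ->; split; first by apply: imset_f.
by rewrite /restr ffunE iW /= e.
Qed.


Lemma pc_set0 (S : {set {ffun 'I_k -> T}}) : pc set0 S = (S != set0).
Proof.
have [->|[s0 s0S]] := set_0Vmem S; first by rewrite /pc imset0 cards0 eqxx.
have -> : S != set0 by apply/set0Pn; exists s0.
rewrite /pc (_ : [set _ | _ in S] = [set restr set0 s0]) ?cards1 //.
apply/setP => y; rewrite inE; apply/imsetP/eqP.
  by case=> s _ ->; apply/ffunP => j; rewrite !ffunE inE.
by move=> ->; exists s0.
Qed.

Lemma shearer_gen (R : realFieldType) (r : nat) (Fs : seq {set 'I_k}) :
  (0 < r)%nat -> (forall i : 'I_k, count (fun W : {set 'I_k} => i \in W) Fs = r) ->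
  forall (U : {set 'I_k}) (S : {set {ffun 'I_k -> T}}),
  (pc U S)%:R ^+ r <= \prod_(W <- Fs) (pc (W :&: U) S)%:R :> R.
Proof.
move=> r0 cnt U; move: {2}#|U| (erefl #|U|) => n; elim: n U => [|n IH] U cU S.
  move/eqP: cU; rewrite cards_eq0 => /eqP ->.
  under eq_bigr => W _ do rewrite setI0.
  rewrite pc_set0; case: (S != set0) => /=.
    by rewrite expr1n big1.
  by rewrite expr0n gtn_eqF //; apply: prodr_ge0 => W _.
have [i iU] : exists i, i \in U by apply/set0Pn; rewrite -card_gt0 cU.
set U' := U :\ i.
have cU' : #|U'| = n by move: cU; rewrite (cardsD1 i) iU add1n => -[].
pose Sx x := [set s in S | s i == x].
have restr_sub (V V' : {set 'I_k}) s s' : V \subset V' -> restr V' s = restr V' s' -> restr V s = restr V s'.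
  move=> /subsetP VV' e; apply/ffunP => j; rewrite !ffunE.
  case: ifP => // jV; move/ffunP: e => /(_ j); rewrite !ffunE (VV' j jV); by [].
have SxS x : Sx x \subset S by apply/subsetP => s; rewrite inE => /andP[].
have c_le x : (pc U (Sx x) <= pc U' (Sx x))%nat.
  apply: card_imset_ker => s s'; rewrite !inE => /andP[_ /eqP si] /andP[_ /eqP si'] e.
  apply/ffunP => j; rewrite !ffunE; case: (eqVneq j i) => [->|ji].
    by rewrite iU si si'.
  move/ffunP: e => /(_ j); rewrite !ffunE !inE ji /=; by [].
have nW (W : {set 'I_k}) : i \notin W -> W :&: U' = W :&: U.
  move=> iW; apply/setP => j; rewrite !inE; case: (eqVneq j i) => [->|]; last by [].
  by rewrite (negPf iW).
have a_le (W : {set 'I_k}) x : (pc (W :&: U') (Sx x) <= pc (W :&: U) (Sx x))%nat.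
  apply: card_imset_ker => s s' _ _; apply: restr_sub.
  by apply: setIS; apply: subD1set.
have b_le V x : (pc V (Sx x) <= pc V S)%nat.
  by apply: subset_leq_card; apply: imsetS.
have sumW (W : {set 'I_k}) : i \in W -> \sum_x pc (W :&: U) (Sx x) = pc (W :&: U) S.
  by move=> iW; rewrite (pc_part S (i := i)) // inE iW iU.
have sz : size [seq W <- Fs | i \in (W : {set 'I_k})] = r by rewrite size_filter cnt.
rewrite (pc_part S iU) natr_sum.
rewrite (bigID (fun W : {set 'I_k} => i \in W)) /= mulrC -[X in _ <= _ * X]big_filter.
have -> : \prod_(W <- [seq W <- Fs | i \in (W : {set 'I_k})]) (pc (W :&: U) S)%:R =
          \prod_(W <- [seq W <- Fs | i \in (W : {set 'I_k})]) \sum_x (pc (W :&: U) (Sx x))%:R :> R.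
  apply: eq_big_seq => W; rewrite mem_filter => /andP[iW _].
  by rewrite -natr_sum sumW.
rewrite -{1}sz; apply: holder_seq.
- by rewrite sz.
- by apply: prodr_ge0 => W _; rewrite ler0n.
- by move=> x; rewrite ler0n.
- by move=> W x; rewrite ler0n.
move=> x; rewrite sz.
apply: le_trans (_ : (pc U' (Sx x))%:R ^+ r <= _).
  by rewrite ler_pXn2r // ?nnegrE ?ler0n // ler_nat; exact: c_le.
apply: le_trans (IH U' cU' (Sx x)) _.
rewrite (bigID (fun W : {set 'I_k} => i \in W)) /= mulrC -[X in _ * X <= _]big_filter.
apply: ler_pM.
- by apply: prodr_ge0 => W _; rewrite ler0n.
- by apply: prodr_ge0 => W _; rewrite ler0n.
- apply: ler_prod => W iW; rewrite ler0n ler_nat nW //; exact: b_le.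
- apply: ler_prod => W _; rewrite ler0n ler_nat //; exact: a_le.
Qed.

End Shearer.

Lemma shearer (T : finType) (k : nat) (R : realFieldType) (r : nat) (Fs : seq {set 'I_k})
  (S : {set {ffun 'I_k -> T}}) :
  (0 < r)%nat -> (forall i : 'I_k, count (fun W : {set 'I_k} => i \in W) Fs = r) ->
  (#|S|)%:R ^+ r <= \prod_(W <- Fs) (pc W S)%:R :> R.
Proof.
move=> r0 cnt; have := shearer_gen R r0 cnt setT S.
have -> : pc setT S = #|S|.
  rewrite /pc card_in_imset // => s s' _ _ e; apply/ffunP => j.
  by move/ffunP: e => /(_ j); rewrite !ffunE inE => -[].
by under eq_bigr => W _ do rewrite setIT.
Qed.

End PartH.

Section PartC.
Set Implicit Arguments. Unset Strict Implicit. Unset Printing Implicit Defensive.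
Import Order.TTheory GRing.Theory Num.Theory.
Local Open Scope ring_scope.

Lemma count_enumP (T : finType) (P : pred T) : count P (enum T) = #|P|.
Proof. by rewrite cardE /enum_mem size_filter (eq_filter (a2 := predT)) ?filter_predT. Qed.

Section Win.
Variables (n r : nat).
Hypothesis rn : (r <= n.+1)%nat.

Definition win (i : 'I_n.+1) : {set 'I_n.+1} := [set j : 'I_n.+1 | leq (val (j - i)).+1 r].

Lemma win_count (j : 'I_n.+1) :
  count (fun W : {set 'I_n.+1} => j \in W) [seq win i | i <- enum 'I_n.+1] = r.
Proof.
rewrite count_map count_enumP.
have E : [pred i | j \in win i] =i [set j - (widen_ord rn l) | l : 'I_r].
  move=> i; rewrite !inE; apply/idP/imsetP.
    move=> h; exists (Ordinal h) => //.
    have -> : widen_ord rn (Ordinal h) = j - i by apply: val_inj.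
    by rewrite opprB addrC subrK.
  case=> l _ ->; rewrite opprB addrC subrK /=; exact: ltn_ord.
rewrite (eq_card E) card_imset ?card_ord // => l l' /= e.
by apply: val_inj; move/addrI/oppr_inj: e => /(congr1 val).
Qed.

End Win.

Section App.
Variables (F : finFieldType) (A : falgType F).
Local Notation T := (finvect_type A).

Lemma generatesbP (X : seq A) : reflect (generates X) (generatesb X).
Proof. by rewrite /generatesb; case: excluded_middle_informative => h; constructor. Qed.

Lemma gen_mono (X Y : seq A) : {subset X <= Y} -> generates X -> generates Y.
Proof.
move=> XY g v; have [ws [hw hv]] := g v; exists ws; split => //.
apply/allP => w /(allP hw) /allP hw'; apply/allP => a /hw'; exact: XY.
Qed.

Definition NR (r : nat) := [set u : r.-tuple T | ~~ generatesb (A := A) u].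

Variables (n r : nat).
Hypotheses (r0 : (0 < r)%nat) (rn : (r <= n.+1)%nat).

Definition wt (i : 'I_n.+1) (s : {ffun 'I_n.+1 -> T}) : r.-tuple T :=
  [tuple s (i + inord l) | l < r].

Lemma ng_pow : (expn (ng A n.+1) r <= expn #|NR r| n.+1)%nat.
Proof.
set NG := [set t : n.+1.-tuple T | ~~ generatesb (A := A) t].
have -> : ng A n.+1 = #|NG| by [].
set S := [set [ffun j => tnth t j] | t in NG].
have cS : #|S| = #|NG|.
  apply: card_imset => t t' e; apply: eq_from_tnth => j.
  by move/ffunP: e => /(_ j); rewrite !ffunE.
have hp i : (pc (win r i) S <= #|NR r|)%nat.
  rewrite /pc; apply: leq_trans (card_imset_ker (f := restr (win r i)) (g := wt i) (S := S) _) _.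
    move=> s s' _ _ e; apply/ffunP => j; rewrite !ffunE.
    case: ifP => //; rewrite inE => h.
    have := congr1 (fun u => tnth u (Ordinal h)) e; rewrite !tnth_mktuple.
    rewrite (_ : inord (Ordinal h) = j - i); last exact: inord_val.
    by rewrite (addrC i) subrK => ->.
  apply: subset_leq_card; apply/subsetP => u /imsetP[s /imsetP[t tNG ->] ->].
  rewrite inE; move: tNG; rewrite inE; apply: contra => /generatesbP g.
  apply/generatesbP; apply: gen_mono g => a /tnthP[l ->].
  by rewrite tnth_mktuple ffunE mem_tnth.
have := shearer rat S r0 (win_count rn).
rewrite big_map -cS => H.
rewrite -(@ler_nat rat) !natrX; apply: le_trans H _.
rewrite big_enum /=.
have -> : (#|NR r|)%:R ^+ n.+1 = \prod_(i : 'I_n.+1) (#|NR r|)%:R :> rat by rewrite prodr_const card_ord.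
by apply: ler_prod => i _; rewrite ler0n ler_nat hp.
Qed.

End App.

End PartC.

Section PartD1.
Set Implicit Arguments. Unset Strict Implicit. Unset Printing Implicit Defensive.
Import Order.TTheory GRing.Theory Num.Theory.

Section Vals.
Local Open Scope ring_scope.
Variables (F : fieldType) (A : falgType F) (r : nat).

Definition mulseq (t : r.-tuple A) (s : seq A) := [seq tnth t j * v | j <- enum 'I_r, v <- s].

Fixpoint vals (t : r.-tuple A) (l : nat) : seq A :=
  if l is l'.+1 then 1 :: mulseq t (vals t l') else [:: 1].

Lemma amullE' (u v : A) : amull u v = u * v.
Proof. by rewrite lfunE. Qed.

Lemma mul_span (t : r.-tuple A) (s : seq A) j v : v \in <<s>>%VS ->
  tnth t j * v \in <<mulseq t s>>%VS.
Proof.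
move=> vs; rewrite -amullE'.
have : amull (tnth t j) v \in (amull (tnth t j) @: <<s>>)%VS by apply: memv_img.
rewrite limg_span; apply/subvP/sub_span => y /mapP[x xs ->].
by rewrite amullE'; apply: allpairs_f => //; rewrite mem_enum.
Qed.

Lemma mulseq_mono (t : r.-tuple A) s s' : (<<s>> <= <<s'>>)%VS ->
  (<<mulseq t s>> <= <<mulseq t s'>>)%VS.
Proof.
move=> ss'; apply/span_subvP => y /allpairsP[[j v] [_ /= vs ->]].
apply: mul_span; apply: (subvP ss'); exact: memv_span.
Qed.

Lemma vals_cons_span (t : r.-tuple A) s s' : (<<s>> <= <<s'>>)%VS ->
  (<<GRing.one A :: mulseq t s>> <= <<GRing.one A :: mulseq t s'>>)%VS.
Proof.
by move=> h; rewrite !span_cons; apply: addvS => //; apply: mulseq_mono.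
Qed.

Lemma vals_mono (t : r.-tuple A) l : (<<vals t l>> <= <<vals t l.+1>>)%VS.
Proof.
elim: l => [|l IH] /=.
  by apply: sub_span => y; rewrite inE => /eqP ->; rewrite inE eqxx.
exact: vals_cons_span.
Qed.

Lemma vals_monoS (t : r.-tuple A) l l' : (l <= l')%nat -> (<<vals t l>> <= <<vals t l'>>)%VS.
Proof.
move=> /subnK <-; elim: (l' - l)%nat => [|e IH]; first by rewrite add0n subvv.
by apply: subv_trans IH _; rewrite addSn; apply: vals_mono.
Qed.

Lemma vals_stable (t : r.-tuple A) l : <<vals t l>>%VS = <<vals t l.+1>>%VS ->
  <<vals t l.+1>>%VS = <<vals t l.+2>>%VS.
Proof.
move=> e; apply/eqP; rewrite eqEsubv vals_mono /=.
by apply: vals_cons_span; rewrite -e.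
Qed.

Lemma vals_dim (t : r.-tuple A) l :
  (l.+1 <= \dim <<vals t l>>)%nat \/ <<vals t l>>%VS = <<vals t l.+1>>%VS.
Proof.
elim: l => [|l [IH|IH]].
- left; rewrite /= span_seq1 dim_vline oner_neq0 //.
- have [e|ne] := eqVneq <<vals t l.+1>>%VS <<vals t l.+2>>%VS; first by right.
  left; apply: leq_ltn_trans IH _.
  rewrite ltn_neqAle dimvS ?vals_mono // andbT.
  apply: contra ne => /eqP de; apply/eqP; apply: vals_stable.
  by apply/eqP; rewrite eqEdim vals_mono de leqnn.
- by right; apply: vals_stable.
Qed.


Lemma vals_full (X : r.-tuple A) : generates X ->
  <<vals X (\dim (fullv : {vspace A})).-1>>%VS = fullv.
Proof.
move=> gX; set M := (\dim (fullv : {vspace A})).-1.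
have dpos : (0 < \dim (fullv : {vspace A}))%nat.
  rewrite lt0n dimv_eq0; apply/negP => /eqP h.
  have : (GRing.one A) \in (fullv : {vspace A}) by apply: memvf.
  by rewrite h memv0 oner_eq0.
have allsub : forall l, (<<vals X l>> <= <<vals X M>>)%VS.
  case: (vals_dim X M) => [hd|hs].
    have -> : <<vals X M>>%VS = fullv.
      apply/eqP; rewrite eqEdim subvf /=; apply: leq_trans hd.
      by rewrite /M prednK.
    by move=> l; apply: subvf.
  have st2 : forall e, <<vals X (M + e)>>%VS = <<vals X M>>%VS /\
      <<vals X (M + e)>>%VS = <<vals X (M + e).+1>>%VS.
    elim=> [|e [IH1 IH2]]; first by rewrite addn0.
    rewrite addnS; split; first by rewrite -IH2.
    exact: vals_stable.
  have st e : <<vals X (M + e)>>%VS = <<vals X M>>%VS by case: (st2 e).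
  move=> l; case: (leqP l M) => [lM|Ml]; first exact: vals_monoS.
  by rewrite -(subnKC (ltnW Ml)) st subvv.
have prodw : forall w : seq A, all (fun a => a \in X) w ->
    \prod_(a <- w) a \in <<vals X (size w)>>%VS.
  elim=> [|a w IH] /=; first by rewrite big_nil => _; apply: memv_span; rewrite inE.
  case/andP => /tnthP[j ->] /IH hw; rewrite big_cons span_cons.
  by apply: (subvP (addvSr _ _)); apply: mul_span.
apply/eqP; rewrite eqEsubv subvf /=; apply/subvP => v _.
have [ws [hw hv]] := gX v; move: hv; apply/subvP/span_subvP => y /mapP[w wws ->].
apply: (subvP (allsub (size w))); apply: prodw; exact: (allP hw).
Qed.

Lemma vals_prod (t : r.-tuple A) l y : y \in vals t l ->
  exists w, all (fun a => a \in t) w /\ y = \prod_(a <- w) a.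
Proof.
elim: l y => [|l IH] y /=.
  by rewrite inE => /eqP ->; exists [::]; rewrite big_nil.
rewrite inE => /orP[/eqP ->|]; first by exists [::]; rewrite big_nil.
case/allpairsP => -[j v] [_ /= /IH [w [hw ->]] ->].
by exists (tnth t j :: w); rewrite big_cons /= mem_tnth hw.
Qed.

Lemma seq_choice (T1 : Type) (T2 : eqType) (P : pred T1) (f : T1 -> T2) (s : seq T2) :
  (forall y, y \in s -> exists w, P w /\ y = f w) ->
  exists ws, all P ws /\ s = map f ws.
Proof.
elim: s => [|y s IH] h; first by exists [::].
have [w [Pw ->]] := h y (mem_head y s).
have [ws [Pws ->]] := IH (fun z hz => h z (@mem_behead _ (y :: s) z hz)).
by exists (w :: ws); rewrite /= Pw.
Qed.

Lemma gen_of_vals (t : r.-tuple A) l : <<vals t l>>%VS = fullv -> generates t.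
Proof.
move=> e; have [ws [hw ews]] : exists ws, all (fun w => all (fun a => a \in t) w) ws /\
    vals t l = map (fun w => \prod_(a <- w) a) ws.
  apply: seq_choice => y /vals_prod [w [hw ->]].
  by exists w; split.
move=> v; exists ws; split => //; rewrite -ews e; exact: memvf.
Qed.

End Vals.

End PartD1.

Section PartD2.
Set Implicit Arguments. Unset Strict Implicit. Unset Printing Implicit Defensive.
Import Order.TTheory GRing.Theory Num.Theory.

Section Polys.
Local Open Scope ring_scope.
Variables (F : fieldType) (A : falgType F) (r : nat) (X d : r.-tuple A).

Definition epol (j : 'I_r) : {poly A} := (tnth X j)%:P + 'X * (tnth d j)%:P.

Fixpoint polys (l : nat) : seq {poly A} :=
  if l is l'.+1 then 1 :: [seq epol j * p | j <- enum 'I_r, p <- polys l'] else [:: 1].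

Definition pt (mu : F) : r.-tuple A := [tuple tnth X j + mu *: tnth d j | j < r].

Lemma comm_scal (mu : F) (p : {poly A}) : comm_poly p (mu%:A).
Proof. by rewrite /comm_poly mulr_algl mulr_algr. Qed.

Lemma eval_epol mu j : (epol j).[mu%:A] = tnth (pt mu) j.
Proof.
rewrite /epol hornerD hornerC hornerM_comm; last exact: comm_scal.
rewrite hornerX hornerC.
by rewrite mulr_algl tnth_mktuple.
Qed.

Lemma eval_polys mu l : map (fun p => p.[mu%:A]) (polys l) = vals (pt mu) l.
Proof.
have h1 : (1 : {poly A}).[mu%:A] = 1 by rewrite -polyC1 hornerC.
elim: l => [|l IH] /=; first by rewrite h1.
rewrite h1 map_allpairs /mulseq -IH allpairs_mapr.
congr cons; apply: eq_allpairs => j p.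
by rewrite hornerM_comm; [rewrite eval_epol | exact: comm_scal].
Qed.

Lemma size_epol j : (size (epol j) <= 2)%nat.
Proof.
rewrite /epol; apply: leq_trans (size_polyD _ _) _; rewrite geq_max.
rewrite (leq_trans (size_polyC_leq1 _)) //=.
apply: leq_trans (size_mul_leq _ _) _; rewrite size_polyX.
by have := size_polyC_leq1 (tnth d j); case: (size _).
Qed.

Lemma size_polys l p : p \in polys l -> (size p <= l.+1)%nat.
Proof.
elim: l p => [|l IH] p /=.
  by rewrite inE => /eqP ->; rewrite size_poly1.
rewrite inE => /orP[/eqP ->|]; first by rewrite size_poly1.
case/allpairsP => -[j q] [_ /= /IH hq ->].
apply: leq_trans (size_mul_leq _ _) _.
have := size_epol j; move: (size (epol j)) (size q) hq => a b hb ha.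
by rewrite -subn1 leq_subLR (leq_trans (leq_add ha hb)) // !addSn !add0n.
Qed.

Lemma pt0 : pt 0 = X.
Proof. by apply: eq_from_tnth => j; rewrite tnth_mktuple scale0r addr0. Qed.

End Polys.

End PartD2.

Section PartD3.
Set Implicit Arguments. Unset Strict Implicit. Unset Printing Implicit Defensive.
Import Order.TTheory GRing.Theory Num.Theory.

Section Det.
Local Open Scope ring_scope.
Variables (F : fieldType) (A : falgType F).
Local Notation m := (\dim (fullv : {vspace A})).
Local Notation vb := (vbasis (fullv : {vspace A})).

Definition cmx (u : m.-tuple A) : 'M[F]_m := \matrix_(i, j) coord vb j (tnth u i).

Lemma cmx_mul (u : m.-tuple A) (z : 'rV_m) :
  z *m cmx u = \row_j coord vb j (\sum_i z 0 i *: tnth u i).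
Proof.
apply/rowP => j; rewrite !mxE linear_sum; apply: eq_bigr => i _.
by rewrite mxE linearZ.
Qed.

Lemma coord_eq0 (w : A) : (forall j, coord vb j w = 0) -> w = 0.
Proof.
move=> h; rewrite (coord_vbasis (memvf w)); apply: big1 => j _.
by rewrite h scale0r.
Qed.

Lemma det_free (u : m.-tuple A) : (\det (cmx u) != 0) = free u.
Proof.
apply/idP/idP => [dn0|fu].
  apply/freeP => z hz i.
  have : (\row_i z i) *m cmx u = 0.
    rewrite cmx_mul; apply/rowP => j; rewrite !mxE.
    rewrite (_ : \sum_i _ = \sum_(i0 < m) z i0 *: u`_i0); last first.
      by apply: eq_bigr => i0 _; rewrite mxE (tnth_nth 0).
    by rewrite hz linear0.
  move/(congr1 (fun v => v *m invmx (cmx u))); rewrite mulmxK ?unitmxE ?unitfE //.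
  by rewrite mul0mx => /rowP /(_ i); rewrite !mxE.
apply/negP => /det0P [v vn0 hv].
have w0 : \sum_i v 0 i *: tnth u i = 0.
  apply: coord_eq0 => j; move/rowP: hv => /(_ j); rewrite cmx_mul !mxE; by [].
move/freeP: fu => /(_ (fun i => v 0 i)) fu.
have : v = 0.
  apply/rowP => i; rewrite !mxE; apply: fu.
  by rewrite -[RHS]w0; apply: eq_bigr => i0 _; rewrite (tnth_nth 0).
by move/eqP; rewrite (negPf vn0).
Qed.

Lemma free_full (u : seq A) : free u -> size u = m -> <<u>>%VS = fullv.
Proof.
move=> fu su; apply/eqP; rewrite eqEdim subvf /=.
by move: fu; rewrite /free => /eqP ->; rewrite su.
Qed.

End Det.

Section Det2.
Local Open Scope ring_scope.

Lemma size_prod_le (R : nzRingType) (I : Type) (s : seq I) (G : I -> {poly R}) n :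
  (forall i, leq (size (G i)) n.+1) -> leq (size (\prod_(i <- s) G i)) (muln (size s) n).+1.
Proof.
move=> hG; elim: s => [|i s IH]; first by rewrite big_nil size_poly1.
rewrite big_cons; apply: leq_trans (size_mul_leq _ _) _.
rewrite -subn1 leq_subLR /=; apply: leq_trans (leq_add (hG i) IH) _.
by rewrite mulSn addSn addnS add1n.
Qed.

Lemma size_det_le (R : comNzRingType) k (M : 'M[{poly R}]_k) n :
  (forall i j, leq (size (M i j)) n.+1) -> leq (size (\det M)) (muln k n).+1.
Proof.
move=> hM; rewrite /determinant; apply: leq_trans (size_sum _ _ _) _.
apply/bigmax_leqP => s _.
have hp : leq (size (\prod_i M i (s i))) (muln k n).+1.
  have := @size_prod_le _ _ (index_enum 'I_k) (fun i => M i (s i)) n (fun i => hM i (s i)).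
  by rewrite /index_enum -enumT size_enum_ord.
case: (odd_perm s) => /=; last by rewrite expr0 mul1r.
by rewrite expr1 mulN1r size_polyN.
Qed.

Lemma card_roots (F : finFieldType) (p : {poly F}) : p != 0 ->
  (#|[set x | root p x]| <= (size p).-1)%nat.
Proof.
move=> p0; rewrite cardE -ltnS prednK ?size_poly_gt0 //.
apply: max_poly_roots => //; last exact: enum_uniq.
by apply/allP => x; rewrite mem_enum inE.
Qed.

Lemma free_mask (K : fieldType) (vT : vectType K) (s : seq vT) :
  exists msk, free (mask msk s) /\ <<mask msk s>>%VS = <<s>>%VS.
Proof.
elim: s => [|x s [msk [fm sm]]]; first by exists [::]; rewrite /= nil_free.
case: (boolP (x \in <<mask msk s>>%VS)) => xin.
  exists (false :: msk); split => //=; rewrite span_cons -sm.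
  by apply/esym/addv_idPr; rewrite -memvE.
exists (true :: msk); split => /=; first by rewrite free_cons xin fm.
by rewrite !span_cons sm.
Qed.

Variables (F : fieldType) (A : falgType F).
Local Notation m := (\dim (fullv : {vspace A})).
Local Notation vb := (vbasis (fullv : {vspace A})).

Lemma map_poly_coord_eval j (p : {poly A}) (mu : F) :
  (map_poly (coord vb j) p).[mu] = coord vb j p.[mu%:A].
Proof.
have hs : (size (map_poly (coord vb j) p) <= size p)%nat.
  by rewrite map_polyE (leq_trans (size_Poly _)) ?size_map.
rewrite (horner_coef_wide mu hs) (horner_coef_wide (mu%:A) (leqnn (size p))).
rewrite linear_sum; apply: eq_bigr => i _.
rewrite coef_map_id0 ?linear0 // exprZn expr1n mulr_algr linearZ /=.
by rewrite mulrC.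
Qed.

End Det2.

End PartD3.

Section PartD4.
Set Implicit Arguments. Unset Strict Implicit. Unset Printing Implicit Defensive.
Import Order.TTheory GRing.Theory Num.Theory.

Section Line.
Local Open Scope ring_scope.
Variables (F : finFieldType) (A : falgType F) (r : nat) (X d : r.-tuple A).
Local Notation m := (\dim (fullv : {vspace A})).
Local Notation vb := (vbasis (fullv : {vspace A})).
Hypothesis gX : generates X.

Lemma line_bound :
  leq #|[set mu : F | ~~ generatesb (A := A) (pt X d mu)]| (muln m m.-1).
Proof.
set L := m.-1.
have hv : <<vals X L>>%VS = fullv := vals_full gX.
set P := polys X d L.
have [msk [fm sm]] := free_mask (vals X L).
set Q := mask msk P.
have eQ mu : map (fun p => p.[mu%:A]) Q = mask msk (vals (pt X d mu) L).
  by rewrite map_mask eval_polys.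
have sQ : size Q == m.
  have := fm; rewrite /free => /eqP; rewrite sm hv => e.
  by rewrite e -(pt0 X d) -eQ size_map.
pose Qt : m.-tuple {poly A} := Tuple sQ.
pose Y mu := map_tuple (fun p => p.[mu%:A]) Qt.
have eY mu : (Y mu : seq A) = mask msk (vals (pt X d mu) L) by rewrite /= -eQ.
pose Mp : 'M[{poly F}]_m := \matrix_(i, j) map_poly (coord vb j) (tnth Qt i).
have hdet mu : (\det Mp).[mu] = \det (cmx (Y mu)).
  rewrite -horner_evalE -det_map_mx; congr (\det _); apply/matrixP => i j.
  by rewrite !mxE /= horner_evalE map_poly_coord_eval tnth_map.
have D0 : \det Mp != 0.
  apply: contraTneq fm => D0; rewrite -(pt0 X d) -eY -det_free -hdet D0 horner0.
  by rewrite eqxx.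
have sub : [set mu : F | ~~ generatesb (A := A) (pt X d mu)] \subset [set mu | root (\det Mp) mu].
  apply/subsetP => mu; rewrite !inE; apply: contraR => nr.
  apply/generatesbP; apply: (gen_of_vals (l := L)).
  apply/eqP; rewrite eqEsubv subvf /=.
  have <- : <<Y mu>>%VS = fullv.
    by apply: free_full; [rewrite -det_free -hdet | rewrite size_tuple].
  by apply: sub_span => y; rewrite eY => /mem_mask.
apply: leq_trans (subset_leq_card sub) _.
apply: leq_trans (card_roots D0) _.
rewrite -ltnS prednK ?size_poly_gt0 //.
apply: size_det_le => i j; rewrite mxE.
rewrite map_polyE (leq_trans (size_Poly _)) // size_map.
apply: size_polys; apply: (mem_mask (m := msk)).
by rewrite -/Q; apply: (mem_tnth i Qt).
Qed.

End Line.

End PartD4.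

Section PartD5.
Set Implicit Arguments. Unset Strict Implicit. Unset Printing Implicit Defensive.
Import Order.TTheory GRing.Theory Num.Theory.

Lemma card_sum_b2n (T : finType) (P : pred T) : #|[set x | P x]| = \sum_x (P x : nat).
Proof.
rewrite -sum1_card big_mkcond /=; apply: eq_bigr => x _; rewrite inE; by case: (P x).
Qed.

Section Count.
Variables (F : finFieldType) (A : falgType F) (r : nat) (X : r.-tuple A).
Local Notation m := (\dim (fullv : {vspace A})).
Local Notation T := (finvect_type A).
Hypothesis gX : generates X.

Lemma card_T : #|T| = expn #|F| m.
Proof.
have := @card_vspace F (finvect_type A) (Vector.class (finvect_type A)) fullv.
rewrite (@card_vspacef F (finvect_type A) (Vector.class (finvect_type A))) => ->.
by rewrite !dimvf.
Qed.

Lemma NR_line :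
  leq (muln #|F|.-1 #|NR A r|) (muln (expn #|F| (muln m r)) (muln m m.-1)).
Proof.
have e1 (mu : F) : mu != (@GRing.zero F) -> #|NR A r| = \sum_(d : r.-tuple T) ((pt X d mu : r.-tuple T) \in NR A r : nat).
  move=> mu0; rewrite -card_sum_b2n.
  have -> : [set d : r.-tuple T | (pt X d mu : r.-tuple T) \in NR A r] = (fun d : r.-tuple T => (pt X d mu : r.-tuple T)) @^-1: NR A r.
    by apply/setP => d; rewrite !inE.
  rewrite card_preimset // => d d' e; apply: eq_from_tnth => j.
  move/(congr1 (fun t => tnth t j)): e; rewrite !tnth_mktuple => /addrI.
  exact: scalerI.
have -> : muln #|F|.-1 #|NR A r| = \sum_(mu | mu != (@GRing.zero F)) \sum_(d : r.-tuple T) ((pt X d mu : r.-tuple T) \in NR A r : nat).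
  rewrite -(cardC1 ((@GRing.zero F))) -sum_nat_const; apply: eq_big => [mu|mu mu0]; first by [].
  exact: e1.
rewrite exchange_big /= expnM -card_T -card_tuple -sum_nat_const.
apply: leq_sum => d _; apply: leq_trans _ (line_bound d gX).
rewrite card_sum_b2n [X in (X <= _)%N]big_mkcond; apply: leq_sum => mu _.
by rewrite /NR inE; case: (mu != _).
Qed.

End Count.

Lemma dim_falg_gt0' (F : fieldType) (A : falgType F) : (0 < \dim (fullv : {vspace A}))%N.
Proof.
rewrite lt0n dimv_eq0; apply/negP => /eqP h.
have : (GRing.one A) \in (fullv : {vspace A}) by apply: memvf.
by rewrite h memv0 GRing.oner_eq0.
Qed.

Lemma NR_bound (F : finFieldType) (A : falgType F) (r : nat) (X : r.-tuple A) :
  generates X -> (1 <= r)%nat ->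
  (#|NR A r| <= \dim (fullv : {vspace A}) * \dim (fullv : {vspace A}) *
      expn #|F| (\dim (fullv : {vspace A}) * r - 1))%nat.
Proof.
move=> gX r1; set m := \dim (fullv : {vspace A}); set q := #|F|.
have m1 : (0 < m)%nat by apply: dim_falg_gt0'.
have q1 : (1 < q)%nat by apply: card_finNzRing_gt1.
set e := (m * r - 1)%nat.
have he : (m * r = e.+1)%nat by rewrite /e subn1 prednK // muln_gt0 m1.
case: (leqP q m) => [qm|mq].
  apply: leq_trans (max_card _) _.
  rewrite card_tuple card_T -expnM he expnS leq_mul2r; apply/orP; right.
  by apply: leq_trans qm _; apply: leq_pmulr.
have H := NR_line gX.
have q0 : (0 < q.-1)%nat by rewrite -ltnS prednK // ltnW.
rewrite -(leq_pmul2l q0); apply: leq_trans H _.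
rewrite he expnS -/q.
have key : (q * (m * m.-1) <= q.-1 * (m * m))%nat.
  rewrite mulnCA [X in (_ <= X)%nat]mulnCA leq_mul2l; apply/orP; right.
  rewrite -!subn1 mulnBr mulnBl muln1 mul1n; apply: leq_sub2l.
  exact: ltnW.
have L : (q * expn q e * (m * m.-1) = expn q e * (q * (m * m.-1)))%nat by rewrite -mulnA mulnCA.
have R : (q.-1 * (m * m * expn q e) = expn q e * (q.-1 * (m * m)))%nat by rewrite mulnA mulnC.
by rewrite L R leq_mul2l key orbT.
Qed.

End PartD5.

Section PartE.
Set Implicit Arguments. Unset Strict Implicit. Unset Printing Implicit Defensive.

Lemma INR_expn (a b : nat) : INR (expn a b) = (INR a ^ b)%R.
Proof.
elim: b => [|b IH]; first by rewrite expn0.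
by rewrite expnS mulnE mult_INR IH.
Qed.

Lemma real_step (x B k r : nat) : (0 < r)%nat -> (0 < B)%nat ->
  (expn x r <= expn B k)%nat ->
  (INR x <= Rpower (INR B) (INR k / INR r))%R.
Proof.
move=> r0 B0 H.
have Hr : (0 < INR r)%R by apply: lt_0_INR; apply/ltP.
have HB : (0 < INR B)%R by apply: lt_0_INR; apply/ltP.
have H' : (INR x ^ r <= INR B ^ k)%R.
  by rewrite -!INR_expn; apply: le_INR; apply/leP.
case: (posnP x) => [->|x0].
  by rewrite /= /Rpower; apply: Rlt_le; apply: exp_pos.
have Hx : (0 < INR x)%R by apply: lt_0_INR; apply/ltP.
have -> : INR x = Rpower (INR x ^ r) (/ INR r).
  rewrite -Rpower_pow // Rpower_mult Rinv_r ?Rpower_1 //.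
  by apply: Rgt_not_eq.
have -> : Rpower (INR B) (INR k / INR r) = Rpower (INR B ^ k) (/ INR r).
  by rewrite -Rpower_pow // Rpower_mult.
apply: Rle_Rpower_l; first by apply: Rlt_le; apply: Rinv_0_lt_compat.
split; first by apply: pow_lt.
exact: H'.
Qed.



Lemma dim_falg_gt0 (F : fieldType) (A : falgType F) : (0 < \dim (fullv : {vspace A}))%nat.
Proof.
rewrite lt0n dimv_eq0; apply/negP => /eqP h.
have : (GRing.one A) \in (fullv : {vspace A}) by apply: memvf.
by rewrite h memv0 GRing.oner_eq0.
Qed.


End PartE.

Theorem mainTheorem6 (F : finFieldType) (A : falgType F) (r : nat) :
  (1 <= r)%N ->
  (exists X : r.-tuple A, generates X) ->
  forall k : nat, (r < k)%N ->
  (INR (ng A k) <=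
     Rpower (INR (\dim (fullv : {vspace A}))) (2 * INR k / INR r) *
     Rpower (INR #|F|)
       (INR (\dim (fullv : {vspace A})) * INR k - INR k / INR r))%R.
Proof.
move=> r1 [X gX] k rk.
case: k rk => [//|n] rk.
set m := \dim (fullv : {vspace A}).
set q := #|F|.
have m1 : (0 < m)%nat by apply: dim_falg_gt0.
have q1 : (1 < q)%nat by apply: card_finNzRing_gt1.
set B := (m * m * expn q (m * r - 1))%nat.
have B0 : (0 < B)%nat by rewrite !muln_gt0 m1 expn_gt0 ltnW.
have HB : (expn (ng A n.+1) r <= expn B n.+1)%nat.
  apply: leq_trans (ng_pow A r1 (ltnW rk)) _.
  by rewrite leq_exp2r //; apply: NR_bound gX r1.
have := real_step r1 B0 HB.
have Hr : (0 < INR r)%R by apply: lt_0_INR; apply/ltP.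
have Hm : (0 < INR m)%R by apply: lt_0_INR; apply/ltP.
have Hq : (0 < INR q)%R by apply: lt_0_INR; apply/ltP; apply: ltnW.
have mr1 : INR (m * r - 1) = (INR m * INR r - 1)%R.
  rewrite minus_INR ?mulnE ?mult_INR //; apply/leP; by rewrite muln_gt0 m1.
have -> : INR B = (INR m * INR m * Rpower (INR q) (INR (m * r - 1)))%R.
  by rewrite /B !mulnE !mult_INR INR_expn Rpower_pow.
rewrite -Rpower_mult_distr; last by rewrite /Rpower; apply: exp_pos.
  2: by apply: Rmult_lt_0_compat.
rewrite -Rpower_mult_distr // Rpower_mult -Rpower_plus mr1.
have -> : (INR n.+1 / INR r + INR n.+1 / INR r = 2 * INR n.+1 / INR r)%R by field; apply: Rgt_not_eq.
have -> : ((INR m * INR r - 1) * (INR n.+1 / INR r) = INR m * INR n.+1 - INR n.+1 / INR r)%R.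
  by field; apply: Rgt_not_eq.
by [].
Qed.
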